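(* Let $C$ be an $A$-code of length $2$. Then $C$ is self-dual ($C=C^\perp$) if and only if either its canonical generator matrix is $(1\ \ g_2)$ with $g_2^2=-1$ in $A$, or its canonical generator matrix is $\begin{pmatrix}g_1&g_2\\0&g_3\end{pmatrix}$ (with $g_1,g_3$ nonzero monic divisors of $f$, $g_3\mid (f/g_1)g_2$, $\deg g_2<\deg g_3$) and there exist $g',f',r\in\mathbb{F}[x]$ with $g'^2=rf'-1$, $f=g_1^2f'$, $g_3=g_1f'$ and $g_2=g_1g'$.
   Context: Let $\mathbb{F}$ be a finite field, $f(x)\in\mathbb{F}[x]$ monic of degree $m$, $A=\mathbb{F}[x]/\langle f(x)\rangle$, elements identified with polynomials of degree $<m$. An $A$-code of length $l$ is an $A$-submodule of $A^l$; $C^\perp=\{a\in A^l:\sum_ia_ic_i=0\ \forall c\in C\}$. The canonical generator matrix (CGM) of a nonzero $A$-code $C$ is the unique matrix over $A$ whose rows generate $C$, are monic with strictly increasing leading indices (position of first nonzero entry), have leading entries dividing $f$, satisfy that $(f/L_i)\cdot(\text{row }i)$ is an $A$-combination of later rows ($L_i$ the leading entry of row $i$), and such that every entry above a leading entry has smaller degree than it. *)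

(* Defs.v *)
(* A = F[x]/<f> is modelled by mathcomp's qpoly type {poly %/ f}
   (elements are polynomials of size < size f, i.e. degree < m). *)
From HB Require Import structures.
From mathcomp Require Import all_boot all_order all_algebra.
Set Implicit Arguments. Unset Strict Implicit. Unset Printing Implicit Defensive.
Import GRing.Theory.
Local Open Scope ring_scope.

Section Codes.
Variables (F : finFieldType) (f : {poly F}).
Local Notation A := {poly %/ f}.

Definition apoly (a : A) : {poly F} := val a.

Definition is_code (l : nat) (C : {set 'rV[A]_l}) : Prop :=
  [/\ 0 \in C,
      (forall u v, u \in C -> v \in C -> u + v \in C)
    & (forall (a : A) u, u \in C -> a *: u \in C)].

Definition dual (l : nat) (C : {set 'rV[A]_l}) : {set 'rV[A]_l} :=
  [set a : 'rV[A]_l | [forall c in C, \sum_(i < l) a 0 i * c 0 i == 0]].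

(* G : 'M_(k,l) is the canonical generator matrix of C.  li i is the leading
   index of row i (position of its first nonzero entry). *)
Definition is_CGM (l : nat) (C : {set 'rV[A]_l}) (k : nat) (G : 'M[A]_(k, l)) : Prop :=
  exists li : 'I_k -> 'I_l,
  [/\
      (forall v, v \in C <-> exists a : 'rV[A]_k, v = a *m G),
      ((forall (i : 'I_k) (j : 'I_l), (j < li i)%N -> G i j = 0) /\ (forall i : 'I_k, G i (li i) != 0)),
      ((forall i : 'I_k, apoly (G i (li i)) \is monic) /\ (forall i : 'I_k, apoly (G i (li i)) %| f)),
      ((forall i i' : 'I_k, (i < i')%N -> (li i < li i')%N) /\
      (forall i : 'I_k, exists b : 'I_k -> A, (forall j : 'I_k, (j <= i)%N -> b j = 0) /\
          in_qpoly f (f %/ apoly (G i (li i))) *: row i G = \sum_(j < k) b j *: row j G))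
    &
      (forall i i' : 'I_k, (i' < i)%N ->
          (size (apoly (G i' (li i))) < size (apoly (G i (li i))))%N)].

Definition mx12 (a b : A) : 'M[A]_(1, 2) :=
  \matrix_(i < 1, j < 2) (if j == ord0 then a else b).
Definition mx22 (a b c d : A) : 'M[A]_(2, 2) :=
  \matrix_(i < 2, j < 2)
     (if i == ord0 then (if j == ord0 then a else b) else (if j == ord0 then c else d)).

End Codes.

(* Main.v *)
Require Import Defs.
From HB Require Import structures.
From mathcomp Require Import all_boot all_order all_algebra ring.
Import GRing.Theory.
Local Open Scope ring_scope.
Set Implicit Arguments. Unset Strict Implicit. Unset Printing Implicit Defensive.

Section Aux.
Variables (F : finFieldType) (f : {poly F}).
Hypotheses (f_monic : f \is monic) (f_deg : (1 < size f)%N).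
Local Notation A := {poly %/ f}.
Local Notation pi := (in_qpoly f).

Lemma mkmE : mk_monic f = f.
Proof. by rewrite /mk_monic f_deg f_monic. Qed.

Lemma f_neq0 : f != 0.
Proof. by rewrite -size_poly_gt0 (ltn_trans _ f_deg). Qed.

Lemma size_A (a : A) : (size (val a) < size f)%N.
Proof. by have := size_mk_monic a; rewrite [in X in (_ < X)%N -> _]mkmE. Qed.

Lemma val_pi (p : {poly F}) : val (pi p) = p %% f.
Proof. by rewrite /= mkmE Pdiv.IdomainMonic.modpE. Qed.

Lemma piK (a : A) : pi (val a) = a.
Proof. by apply: val_inj; rewrite val_pi modp_small // size_A. Qed.

Lemma pi_small (p : {poly F}) : (size p < size f)%N -> val (pi p) = p.
Proof. by move=> h; rewrite val_pi modp_small. Qed.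

Lemma pi_eq0 (p : {poly F}) : (pi p == 0) = (f %| p).
Proof.
apply/eqP/idP => [/(congr1 val)|].
  by rewrite val_pi /= => /modp_eq0P.
by move/modp_eq0P => h; apply: val_inj; rewrite val_pi h.
Qed.

Lemma pi_f : pi f = 0.
Proof. by apply/eqP; rewrite pi_eq0 dvdpp. Qed.

Lemma dvd_modf (d p : {poly F}) : d %| f -> (d %| val (pi p)) = (d %| p).
Proof. by move=> df; rewrite val_pi -dvdp_mod. Qed.

Lemma lift_eq0 (a : A) : (a == 0) = (val a == 0).
Proof. by []. Qed.

Lemma ideal_gen (P : pred A) :
  (forall a b, P a -> P b -> P (a + b)) -> (forall c a, P a -> P (c * a)) ->
  (exists a, P a && (a != 0)) ->
  exists g : {poly F}, [/\ g \is monic, g %| f, (size g < size f)%N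
      & forall a, P a = (g %| val a)].
Proof.
move=> PD PM Pnz.
have P0 : P 0 by case: Pnz => a /andP[Pa _]; rewrite -(mul0r a) PM.
have PN : forall a, P a -> P (- a) by move=> a Pa; rewrite -mulN1r PM.
pose Q n := [exists a, [&& P a, a != 0 & size (val a) == n]].
have exQ : exists n, Q n.
  by case: Pnz => a /andP[Pa a0]; exists (size (val a)); apply/existsP; exists a; rewrite Pa a0 eqxx.
case: (ex_minnP exQ) => n /existsP[a0 /and3P[Pa0 a00 /eqP sa0]] minn.
have va0 : val a0 != 0 by [].
pose g := (lead_coef (val a0))^-1 *: val a0.
have lc0 : lead_coef (val a0) != 0 by rewrite lead_coef_eq0.
have sg : size g = size (val a0) by rewrite size_scale // invr_eq0.
have gm : g \is monic by rewrite monicE lead_coefZ mulVf.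
have Pg : P (pi g).
  by rewrite /g -mul_polyC rmorphM /= piK PM.
have key : forall p, P (pi p) -> g %| p.
  move=> p Pp; apply/modp_eq0P; apply/eqP; apply: contraT => r0.
  have sr : (size (p %% g)%R < size g)%N by rewrite ltn_modp -size_poly_gt0 sg size_poly_gt0.
  have e : pi (p %% g) = pi p - pi (p %/ g) * pi g.
    by rewrite -rmorphM -rmorphB /= {2}(divp_eq p g) addrAC subrr add0r.
  have Pr : P (pi (p %% g)) by rewrite e PD // PN // PM.
  have vr : val (pi (p %% g)) = p %% g.
    by rewrite pi_small // (ltn_trans sr) // sg size_A.
  have : Q (size (p %% g)).
    apply/existsP; exists (pi (p %% g)); rewrite Pr vr eqxx andbT.
    by rewrite lift_eq0 vr.
  by move/minn; rewrite leqNgt -sa0 -sg sr.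
exists g; split => //.
- by apply: key; rewrite pi_f.
- by rewrite sg size_A.
move=> a; apply/idP/idP; first by move=> Pa; apply: key; rewrite piK.
move=> ga; rewrite -(piK a); case/dvdpP: ga => q ->; by rewrite rmorphM /= PM.
Qed.


Definition i1 : 'I_2 := ord_max.

Lemma mx12_0j (a b : A) : (mx12 a b) 0 0 = a.
Proof. by rewrite mxE. Qed.
Lemma mx12_1j (a b : A) : (mx12 a b) 0 i1 = b.
Proof. by rewrite mxE. Qed.

Lemma mx12E (v : 'rV[A]_2) : v = mx12 (v 0 0) (v 0 i1).
Proof.
apply/rowP => j; rewrite mxE; case: ifP => [/eqP -> //|].
by case: j => [[|[|m]] //] jl _; rewrite (_ : Ordinal jl = i1) //; apply: val_inj.
Qed.

Lemma mx12_inj (a b c d : A) : mx12 a b = mx12 c d -> a = c /\ b = d.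
Proof.
by move=> e; split; [rewrite -(mx12_0j a b) e mx12_0j | rewrite -(mx12_1j a b) e mx12_1j].
Qed.

Lemma mx12D (a b c d : A) : mx12 a b + mx12 c d = mx12 (a + c) (b + d).
Proof. by apply/rowP => j; rewrite !mxE; case: ifP. Qed.

Lemma mx12Z (x a b : A) : x *: mx12 a b = mx12 (x * a) (x * b).
Proof. by apply/rowP => j; rewrite !mxE; case: ifP. Qed.

Lemma mx12N (a b : A) : - mx12 a b = mx12 (- a) (- b).
Proof. by apply/rowP => j; rewrite !mxE; case: ifP. Qed.

Lemma mx12_0 : mx12 0 0 = 0 :> 'rV[A]_2.
Proof. by apply/rowP => j; rewrite !mxE; case: ifP. Qed.

Lemma dot12 (a b c d : A) :
  \sum_(i < 2) (mx12 a b) 0 i * (mx12 c d) 0 i = a * c + b * d.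
Proof. by rewrite big_ord_recr big_ord_recr big_ord0 /= !mxE /= add0r. Qed.

Lemma mul12 (u : 'rV[A]_1) (p q : A) : u *m mx12 p q = mx12 (u 0 0 * p) (u 0 0 * q).
Proof.
apply/rowP => j; rewrite !mxE big_ord_recr big_ord0 /= add0r !mxE.
have -> : (ord_max : 'I_1) = 0 by apply: val_inj.
by case: ifP.
Qed.

Lemma mul22 (u : 'rV[A]_2) (p q r s : A) :
  u *m mx22 p q r s = mx12 (u 0 0 * p + u 0 i1 * r) (u 0 0 * q + u 0 i1 * s).
Proof.
apply/rowP => j; rewrite !mxE big_ord_recr big_ord_recr big_ord0 /= add0r !mxE /=.
have -> : widen_ord (leqnSn 1) ord_max = 0 :> 'I_2 by apply: val_inj.
by case: ifP.
Qed.

Section Code.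
Variable C : {set 'rV[A]_2}.
Hypothesis HC : is_code C.

Lemma C0 : mx12 0 0 \in C.
Proof. by rewrite mx12_0; case: HC. Qed.

Lemma CD a b c d : mx12 a b \in C -> mx12 c d \in C -> mx12 (a + c) (b + d) \in C.
Proof. by case: HC => _ h _ h1 h2; rewrite -mx12D h. Qed.

Lemma CZ x a b : mx12 a b \in C -> mx12 (x * a) (x * b) \in C.
Proof. by case: HC => _ _ h h1; rewrite -mx12Z h. Qed.

Lemma CB a b c d : mx12 a b \in C -> mx12 c d \in C -> mx12 (a - c) (b - d) \in C.
Proof.
by move=> h1 h2; apply: CD => //; rewrite -mulN1r -[- d]mulN1r; apply: CZ.
Qed.

Lemma in_dual a b : (mx12 a b \in dual C) <->
  (forall c d, mx12 c d \in C -> a * c + b * d = 0).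
Proof.
rewrite inE; split.
  by move/forall_inP => h c d /h; rewrite dot12 => /eqP.
move=> h; apply/forall_inP => v vC; rewrite (mx12E v) dot12; apply/eqP.
by apply: h; rewrite -mx12E.
Qed.

End Code.


Lemma CGM1_mem (C : {set 'rV[A]_2}) g2 : is_CGM C (mx12 1 g2) ->
  forall a b, mx12 a b \in C <-> b = a * g2.
Proof.
case=> li [gen _ _ _ _] a b; rewrite gen; split.
  by case=> u; rewrite mul12 mulr1 => /mx12_inj [-> ->].
move=> ->; exists (const_mx a); rewrite mul12 !mxE mulr1 //.
Qed.

Lemma CGM2_mem (C : {set 'rV[A]_2}) g1 g2 g3 : is_CGM C (mx22 g1 g2 0 g3) ->
  forall a b, mx12 a b \in C <-> exists u v, a = u * g1 /\ b = u * g2 + v * g3.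
Proof.
case=> li [gen _ _ _ _] a b; rewrite gen; split.
  case=> u; rewrite mul22 mulr0 addr0 => /mx12_inj [-> ->].
  by exists (u 0 0), (u 0 i1).
case=> u [v [-> ->]]; exists (mx12 u v).
by rewrite mul22 mx12_0j mx12_1j mulr0 addr0.
Qed.

Lemma pi_apoly (a : A) : pi (apoly a) = a.
Proof. exact: piK. Qed.

Lemma rev1 (C : {set 'rV[A]_2}) g2 : is_code C -> is_CGM C (mx12 1 g2) ->
  g2 ^+ 2 = -1 -> C = dual C.
Proof.
move=> HC hG hg; have mem := CGM1_mem hG.
apply/setP => v; rewrite (mx12E v); set a := v 0 0; set b := v 0 i1.
apply/idP/idP.
  move/mem => hb; apply/in_dual => c d /mem ->; rewrite hb.
  have -> : a * c + a * g2 * (c * g2) = a * c * (1 + g2 ^+ 2) by ring.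
  by rewrite hg subrr mulr0.
move/in_dual => h; apply/mem.
have /h : mx12 1 g2 \in C by apply/mem; rewrite mul1r.
rewrite mulr1 => /eqP; rewrite addr_eq0 => /eqP ->.
transitivity (- (b * g2 ^+ 2)); last by ring.
by rewrite hg; ring.
Qed.

Lemma rev2 (C : {set 'rV[A]_2}) g1 g2 g3 : is_code C -> is_CGM C (mx22 g1 g2 0 g3) ->
  (exists g' f' r : {poly F},
       [/\ g' ^+ 2 = r * f' - 1, f = apoly g1 ^+ 2 * f',
           apoly g3 = apoly g1 * f' & apoly g2 = apoly g1 * g']) -> C = dual C.
Proof.
move=> HC hG [g' [f' [r [hg hf h3 h2]]]]; have mem := CGM2_mem hG.
set G1 := apoly g1 in hf h3 h2.
have ef : f = G1 * (G1 * f') by rewrite hf; ring.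
have G1f0 : G1 * f' != 0 by apply: contra_neq f_neq0 => e; rewrite ef e mulr0.
have G10 : G1 != 0 by apply: contra_neq G1f0 => ->; rewrite mul0r.
have E1 : g1 * g1 + g2 * g2 = 0.
  rewrite -(pi_apoly g1) -(pi_apoly g2) -!rmorphM -rmorphD; apply/eqP; rewrite pi_eq0.
  rewrite h2 -/G1 (_ : _ + _ = r * f); first exact: dvdp_mull.
  by rewrite hf; transitivity (G1 ^+ 2 * (g' ^+ 2 + 1)); [ring | rewrite hg; ring].
have E2 : g2 * g3 = 0.
  rewrite -(pi_apoly g3) -(pi_apoly g2) -!rmorphM; apply/eqP; rewrite pi_eq0.
  rewrite h2 h3 -/G1 (_ : G1 * g' * (G1 * f') = g' * f); first exact: dvdp_mull.
  by rewrite hf; ring.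
have E3 : g3 * g3 = 0.
  rewrite -(pi_apoly g3) -!rmorphM; apply/eqP; rewrite pi_eq0.
  rewrite h3 -/G1 (_ : G1 * f' * (G1 * f') = f' * f); first exact: dvdp_mull.
  by rewrite hf; ring.
apply/setP => v; rewrite (mx12E v); set a := v 0 0; set b := v 0 i1.
apply/idP/idP.
  move/mem => [u [w [-> ->]]]; apply/in_dual => c d /mem [u' [w' [-> ->]]].
  have -> : u * g1 * (u' * g1) + (u * g2 + w * g3) * (u' * g2 + w' * g3) =
     u * u' * (g1 * g1 + g2 * g2) + (u * w' + w * u') * (g2 * g3) + w * w' * (g3 * g3)
     by ring.
  by rewrite E1 E2 E3; ring.
move/in_dual => h; apply/mem.
have /h : mx12 g1 g2 \in C by apply/mem; exists 1, 0; rewrite !mul1r mul0r addr0.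
have /h : mx12 0 g3 \in C by apply/mem; exists 0, 1; rewrite !mul0r mul1r add0r.
rewrite mulr0 add0r => hb3 hab.
have : G1 * (G1 * f') %| apoly b * (G1 * f').
  by rewrite -ef -pi_eq0 -h3 rmorphM /= !pi_apoly hb3.
rewrite dvdp_mul2r // => /dvdpP [b' hb].
have : G1 * f' %| apoly a + b' * G1 * g'.
  rewrite -(dvdp_mul2l _ _ G10) -ef -pi_eq0 (_ : _ * _ = apoly a * G1 + apoly b * apoly g2).
    by rewrite rmorphD !rmorphM /= !pi_apoly hab.
  by rewrite h2 hb -/G1; ring.
case/dvdpP => t ht.
exists (pi (- (b' * g') + f' * t)), (pi (b' * r - t * g')).
rewrite -(pi_apoly a) -(pi_apoly b) -(pi_apoly g1) -(pi_apoly g2) -(pi_apoly g3).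
rewrite -!rmorphM -rmorphD h2 h3 hb -/G1; split; congr pi.
  have -> : apoly a = t * (G1 * f') - b' * G1 * g' by rewrite -ht; ring.
  by ring.
have -> : (- (b' * g') + f' * t) * (G1 * g') + (b' * r - t * g') * (G1 * f') =
   b' * G1 * (r * f' - g' ^+ 2) by ring.
by rewrite hg; ring.
Qed.


Lemma monic_size1 (p : {poly F}) : p \is monic -> size p = 1%N -> p = 1.
Proof.
move=> /monicP pm sp; rewrite (size1_polyC (eq_leq sp)).
by move: pm; rewrite lead_coefE sp /= => ->.
Qed.

Lemma row0_22 (a b c d : A) : row 0 (mx22 a b c d) = mx12 a b.
Proof. by apply/rowP => j; rewrite !mxE. Qed.
Lemma row1_22 (a b c d : A) : row i1 (mx22 a b c d) = mx12 c d.
Proof. by apply/rowP => j; rewrite !mxE. Qed.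

Lemma sum2 (G : 'I_2 -> 'rV[A]_2) : \sum_(j < 2) G j = G 0 + G i1.
Proof. by rewrite big_ord_recr big_ord_recr big_ord0 /= add0r; congr (G _ + _); apply: val_inj. Qed.

Lemma val1 : val (1 : A) = 1.
Proof. by rewrite -(rmorph1 pi) pi_small // size_poly1. Qed.

Lemma fwd (C : {set 'rV[A]_2}) : is_code C -> C = dual C ->
  (exists g2 : A, is_CGM C (mx12 1 g2) /\ g2 ^+ 2 = -1) \/
  (exists g1 g2 g3 : A, is_CGM C (mx22 g1 g2 0 g3) /\
     exists g' f' r : {poly F},
       [/\ g' ^+ 2 = r * f' - 1, f = apoly g1 ^+ 2 * f',
           apoly g3 = apoly g1 * f' & apoly g2 = apoly g1 * g']).
Proof.
move=> HC HD.
have mem_d : forall a b, mx12 a b \in C <->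
    (forall c d, mx12 c d \in C -> a * c + b * d = 0).
  by move=> a b; have := in_dual C a b; rewrite -HD.
pose I := fun a => [exists b, mx12 a b \in C].
have ID : forall a b, I a -> I b -> I (a + b).
  move=> a b /existsP[c hc] /existsP[d hd]; apply/existsP; exists (c + d).
  exact: CD.
have IM : forall c a, I a -> I (c * a).
  move=> c a /existsP[d hd]; apply/existsP; exists (c * d); exact: CZ.
have /existsP Inz : [exists a, I a && (a != 0)].
  apply: contraT; rewrite negb_exists => /forallP hI.
  have : mx12 1 0 \in C.
    apply/mem_d => c d hcd; rewrite mul1r mul0r addr0.
    have := hI c; rewrite negb_and negbK => /orP[|/eqP //].
    by move/negP; case; apply/existsP; exists d.
  move=> h; have H1 : I 1 by apply/existsP; exists 0.
  by move: (hI 1); rewrite H1 oner_neq0.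
have [g1 [g1m g1f g1s Iiff]] := ideal_gen ID IM Inz.
pose x1 := pi g1.
have vx1 : val x1 = g1 by rewrite pi_small.
have : I x1 by rewrite Iiff vx1 dvdpp.
case/existsP => h hC.
have Idec : forall a, I a -> a = pi (val a %/ g1) * x1.
  move=> a Ia; have ha := Ia; rewrite Iiff in ha.
  by rewrite -rmorphM /= divpK // piK.
pose J := fun b => mx12 0 b \in C.
have JD : forall a b, J a -> J b -> J (a + b).
  by move=> a b ha hb; have := CD HC ha hb; rewrite addr0.
have JM : forall c a, J a -> J (c * a).
  by move=> c a ha; rewrite /J -(mulr0 c); apply: CZ.
have g10 : g1 != 0 by apply: monic_neq0.
have ffg1 : f %/ g1 * g1 = f by rewrite divpK.
have pfg1 : pi (f %/ g1) * x1 = 0 by rewrite -rmorphM /= ffg1 pi_f.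
case: (boolP [exists b, J b && (b != 0)]) => [/existsP Jnz|].
  have [g3 [g3m g3f g3s Jiff]] := ideal_gen JD JM Jnz.
  pose x3 := pi g3.
  have vx3 : val x3 = g3 by rewrite pi_small.
  have hC3 : J x3 by rewrite Jiff vx3 dvdpp.
  have g30 : g3 != 0 by apply: monic_neq0.
  have Jdec : forall b, J b -> b = pi (val b %/ g3) * x3.
    move=> b Jb; have hb := Jb; rewrite Jiff in hb.
    by rewrite -rmorphM /= divpK // piK.
  pose x2 := pi (val h %% g3).
  have vx2 : val x2 = val h %% g3.
    rewrite pi_small // (ltn_trans _ g3s) // ltn_modp //.
  have hC2 : mx12 x1 x2 \in C.
    have := CB HC hC (CZ HC (pi (val h %/ g3)) hC3).
    rewrite mulr0 subr0 (_ : h - _ = x2) // -rmorphM -{1}(piK h) -rmorphB /=.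
    by rewrite {1}(divp_eq (val h) g3) addrC addKr.
  have gen2 : forall a b, mx12 a b \in C <-> exists u v, a = u * x1 /\ b = u * x2 + v * x3.
    move=> a b; split.
      move=> hab; set u := pi (val a %/ g1).
      have ea : a = u * x1 by apply: Idec; apply/existsP; exists b.
      have := CB HC hab (CZ HC u hC2); rewrite -ea subrr => /Jdec eb.
      exists u, (pi (val (b - u * x2) %/ g3)); split => //.
      by rewrite -eb addrC subrK.
    case=> u [v [-> ->]]; have := CD HC (CZ HC u hC2) (CZ HC v hC3).
    by rewrite mulr0 addr0.
  have dchar : forall a b, mx12 a b \in C <-> a * x1 + b * x2 = 0 /\ b * x3 = 0.
    move=> a b; split.
      move/mem_d => hd; split; first exact: hd.
      by have := hd _ _ hC3; rewrite mulr0 add0r.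
    case=> e1 e2; apply/mem_d => c d /gen2 [u [v [-> ->]]].
    have -> : a * (u * x1) + b * (u * x2 + v * x3) = u * (a * x1 + b * x2) + v * (b * x3) by ring.
    by rewrite e1 e2 !mulr0 addr0.
  set G2 := val x2.
  have px1 : x1 = pi g1 by [].
  have px2 : x2 = pi G2 by rewrite piK.
  have px3 : x3 = pi g3 by [].
  have : I (pi (f %/ g1)).
    apply/existsP; exists 0; apply/dchar; rewrite pfg1 !mul0r addr0; split => //.
  rewrite Iiff dvd_modf // => /dvdpP [f' hf'].
  have hf : f = g1 * (g1 * f') by rewrite -ffg1 hf'; ring.
  have g1f'0 : g1 * f' != 0 by apply: contra_neq f_neq0 => e; rewrite hf e mulr0.
  have g1g10 : g1 * g1 != 0 by rewrite mulf_neq0.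
  have [e12 _] := (dchar _ _).1 hC2.
  have d12 : f %| g1 * g1 + G2 * G2.
    by rewrite -pi_eq0 rmorphD !rmorphM /= -px2 e12.
  have : g1 ^+ 2 %| G2 ^+ 2.
    have h1 : g1 ^+ 2 %| f by rewrite hf expr2 mulrA dvdp_mulr.
    have := dvdp_trans h1 d12; rewrite dvdp_addr; first by rewrite expr2.
    by rewrite expr2.
  rewrite dvdp_pexp2r // => /dvdpP [g' hg'].
  have : f' %| 1 + g' ^+ 2.
    rewrite -(dvdp_mul2l (r := g1 * g1)) //.
    rewrite (_ : g1 * g1 * f' = f); last by rewrite hf; ring.
    by rewrite (_ : _ * (1 + _) = g1 * g1 + G2 * G2) // hg'; ring.
  case/dvdpP => r hr.
  have hg : g' ^+ 2 = r * f' - 1 by rewrite -hr; ring.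
  have [_ e33] := (dchar _ _).1 hC3.
  have [e32 _] := (dchar _ _).1 hC3.
  pose hh := f %/ g3.
  have fh3 : f = hh * g3 by rewrite divpK.
  have d33 : f %| g3 * g3 by rewrite -pi_eq0 rmorphM /= e33.
  have hh3 : hh %| g3 by rewrite -(dvdp_mul2r _ _ g30) -fh3.
  have hhf : hh %| g1 * f'.
    rewrite -(dvdp_pexp2r _ _ (isT : (0 < 2)%N)).
    apply: (dvdp_trans (_ : _ %| f)).
      by rewrite fh3 expr2 dvdp_mul2l // ?dvdpp //; apply: contra_neq f_neq0 => e; rewrite fh3 e mul0r.
    rewrite hf (_ : (g1 * f') ^+ 2 = f' * (g1 * (g1 * f'))); last by ring.
    exact: dvdp_mull (dvdpp _).
  have : J (pi (g1 * f')).
    apply/dchar; rewrite mul0r add0r px2 px3 -!rmorphM; split; apply/eqP; rewrite pi_eq0.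
      rewrite hg' (_ : g1 * f' * (g' * g1) = g' * f); last by rewrite hf; ring.
      exact: dvdp_mull (dvdpp _).
    by rewrite fh3 dvdp_mul2r.
  rewrite Jiff dvd_modf // => /dvdpP [t ht].
  have e32' : x3 * x2 = 0 by rewrite -e32 mul0r add0r.
  have d32 : f %| g3 * G2 by rewrite -pi_eq0 rmorphM /= -px2 e32'.
  have tg' : t %| g'.
    rewrite -(dvdp_mul2r _ _ g30) -ht -(dvdp_mul2l _ _ (monic_neq0 g1m)) -hf.
    by rewrite (_ : _ * _ = g3 * G2) // hg'; ring.
  have ehh : hh = g1 * t.
    apply: (mulIf g30); rewrite -fh3 hf ht; ring.
  have tf' : t %| f'.
    apply: (dvdp_trans (dvdp_mulIl t t)).
    rewrite -(dvdp_mul2l _ _ (monic_neq0 g1m)) mulrA -ehh ht [t * g3]mulrC.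
    exact: dvdp_mul hh3 (dvdpp t).
  have cop : coprimep g' f'.
    by apply/Bezout_eq1_coprimepP; exists (- g', r) => /=; rewrite -hr; ring.
  have : coprimep t t by apply: (coprimep_dvdl tf'); apply: (coprimep_dvdr tg').
  rewrite /coprimep gcdpp => /eqP st.
  have lt : lead_coef t = 1.
    have := congr1 lead_coef hf; rewrite (monicP f_monic) lead_coefM (monicP g1m) mul1r ht.
    by rewrite lead_coefM (monicP g3m) mulr1 => <-.
  have t1 : t = 1.
    by apply: monic_size1 => //; apply/monicP.
  rewrite t1 mul1r in ht.
  right; exists x1, x2, x3; split; last first.
    exists g', f', r; rewrite /apoly vx1 vx3 -/G2; split => //; last by rewrite hg' mulrC.
    by rewrite {1}hf; ring.
  have ez : forall (hi : (0 < 2)%N), Ordinal hi = 0 by move=> hi; apply: val_inj.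
  have eo : forall (hi : (1 < 2)%N), Ordinal hi = i1 by move=> hi; apply: val_inj.
  have x10 : x1 != 0 by rewrite lift_eq0 vx1 monic_neq0.
  have x30 : x3 != 0 by rewrite lift_eq0 vx3 monic_neq0.
  exists (fun i => i); split.
  - move=> v; rewrite (mx12E v); split.
      move/gen2 => [u [w [-> ->]]]; exists (mx12 u w).
      by rewrite mul22 mx12_0j mx12_1j mulr0 addr0.
    case=> u; rewrite mul22 mulr0 addr0 => ->; apply/gen2.
    by exists (u 0 0), (u 0 i1).
  - split.
      by move=> [[|[|i]] hi] [[|[|j]] hj] //= _; rewrite mxE.
    by move=> [[|[|i]] hi] //; rewrite mxE.
  - by split; move=> [[|[|i]] hi] //; rewrite mxE /= /apoly ?vx1 ?vx3.
  - split; first by [].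
    move=> [[|[|i]] hi] //.
      have : J (pi (f %/ g1) * x2).
        by have := CZ HC (pi (f %/ g1)) hC2; rewrite pfg1.
      move/Jdec => eq; exists (fun j => if j == 0 then 0 else pi (val (pi (f %/ g1) * x2) %/ g3)).
      split; first by move=> [[|j] hj] //.
      rewrite ez sum2 mxE /= /apoly vx1 row0_22 row1_22 !mx12Z mx12D /=.
      by rewrite pfg1 eq; congr mx12; ring.
    exists (fun _ => 0); split => //.
    rewrite eo sum2 mxE /= /apoly vx3 row1_22 !scale0r addr0 mx12Z mulr0.
    by rewrite -rmorphM /= divpK // pi_f mx12_0.
  - by move=> [[|[|i]] hi] [[|[|j]] hj] //= _; rewrite !mxE /= /apoly vx2 vx3 ltn_modp.
rewrite negb_exists => /forallP hJ.
have Jz : forall b, J b -> b = 0.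
  by move=> b Jb; have := hJ b; rewrite Jb /= negbK => /eqP.
have gen1 : forall a b, mx12 a b \in C -> b = pi (val a %/ g1) * h.
  move=> a b hab; set u := pi _.
  have ea : a = u * x1 by apply: Idec; apply/existsP; exists b.
  have := CB HC hab (CZ HC u hC); rewrite -ea subrr => /Jz /eqP.
  by rewrite subr_eq0 => /eqP.
have fh : pi (f %/ g1) * h = 0.
  by apply: Jz; have := CZ HC (pi (f %/ g1)) hC; rewrite pfg1.
have : J (pi (f %/ g1)).
  apply/mem_d => c d /gen1 ->; rewrite mul0r add0r mulrCA fh mulr0 //.
move/Jz/eqP; rewrite pi_eq0 => hdiv.
have g1_1 : g1 = 1.
  apply: monic_size1 => //; apply/eqP; rewrite -dvdp1.
  rewrite -(dvdp_mul2l (r := f)) ?f_neq0 // mulr1.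
  by rewrite -{2}ffg1 dvdp_mul2r.
have x1_1 : x1 = 1 by rewrite /x1 g1_1 rmorph1.
rewrite x1_1 in hC.
left; exists h; split; last first.
  have := (mem_d 1 h).1 hC 1 h hC; rewrite mulr1 addrC => /eqP.
  by rewrite addr_eq0 expr2 => /eqP.
exists (fun _ => 0); split.
- move=> v; rewrite (mx12E v); split.
    move=> /gen1 ->; rewrite g1_1 divp1 piK; exists (const_mx (v 0 0)).
    by rewrite mul12 !mxE mulr1.
  case=> u ->; rewrite mul12; have := CZ HC (u 0 0) hC; rewrite mulr1 //.
- by split => [i [j hj] //|i]; rewrite mxE oner_neq0.
- by split => i; rewrite mxE /= /apoly val1 ?monic1 ?dvd1p.
- split.
    by move=> [[|i] hi] [[|j] hj].
  move=> i; exists (fun _ => 0); split => //.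
  rewrite mxE /= /apoly val1 divp1 pi_f scale0r big1 // => j _; exact: scale0r.
- by move=> [[|i] hi] [[|j] hj].
Qed.
End Aux.

Unset Implicit Arguments. Set Strict Implicit.

Theorem mainTheorem8 (F : finFieldType) (f : {poly F})
  (f_monic : f \is monic) (f_deg : (1 < size f)%N)
  (C : {set 'rV[{poly %/ f}]_2}) (HC : is_code C) :
  C = dual C <->
  (exists g2 : {poly %/ f}, is_CGM C (mx12 1 g2) /\ g2 ^+ 2 = -1) \/
  (exists g1 g2 g3 : {poly %/ f}, is_CGM C (mx22 g1 g2 0 g3) /\
     exists g' f' r : {poly F},
       [/\ g' ^+ 2 = r * f' - 1, f = apoly g1 ^+ 2 * f',
           apoly g3 = apoly g1 * f' & apoly g2 = apoly g1 * g']).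
Proof.
split; first exact: fwd.
case=> [[g2 [hG hg]]|[g1 [g2 [g3 [hG hx]]]]].
  exact: rev1 hG hg.
exact: rev2 hG hx.
Qed.
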